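(* Let $a,b\in\mathbb R$, $\sigma\in(0,1]$, $t\in[0,1]$, and let $\mu=(1-t)\gamma_{a,\sigma}+t\gamma_{b,\sigma}$. Suppose \[ \min(t,1-t)\ge2\exp\Big(-\frac{(b-a)^2}{32}\Big). \] Then for every $p\ge1$, \[ \inf_{m\in\mathbb R}\mathrm W_p^p(\mu,\gamma_{m,1})\ge\min(t,1-t)\,\frac{|b-a|^p}{4^{p+1}}. \]
   Context: On $\mathbb R$, $\gamma_{a,s}$ denotes the Gaussian measure with mean $a$ and variance $s$. $\mathrm W_p(\mu,\nu)=\inf\mathbb E[|X-Y|^p]^{1/p}$, the infimum over all couplings $(X,Y)$ of $(\mu,\nu)$. *)

(* Defs.v *)
From HB Require Import structures.
From mathcomp Require Import all_boot all_order all_algebra.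
From mathcomp Require Import all_classical all_reals all_analysis.
From mathcomp Require Import normal_distribution.
Set Implicit Arguments. Unset Strict Implicit. Unset Printing Implicit Defensive.
Import Order.TTheory GRing.Theory Num.Theory.
Local Open Scope classical_set_scope.
Local Open Scope ring_scope.

(* gamma_{a,s}: Gaussian with mean a and VARIANCE s (std. deviation sqrt s);
   normal_prob m s of the library is parameterised by the standard deviation. *)
Definition gauss {R : realType} (a s : R) : set R -> \bar R :=
  normal_prob a (Num.sqrt s).

Definition gmix {R : realType} (a b s t : R) : set R -> \bar R :=
  fun A => ((1 - t)%:E * gauss a s A + t%:E * gauss b s A)%E.

Definition coupling {R : realType} (mu nu : set R -> \bar R)
  (pi : probability (R * R)%type R) : Prop :=
  forall A : set R, measurable A ->
    pi (A `*` setT) = mu A /\ pi (setT `*` A) = nu A.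

Definition Wpp {R : realType} (mu nu : set R -> \bar R) (p : R) : \bar R :=
  ereal_inf [set (\int[pi]_z ((`|z.1 - z.2| `^ p)%:E))%E
            | pi in [set pi | coupling mu nu pi]].

(* Main.v *)
Require Import Defs.
From HB Require Import structures.
From mathcomp Require Import all_boot all_order all_algebra.
From mathcomp Require Import all_classical all_reals all_analysis.
From mathcomp Require Import normal_distribution measurable_realfun ring lra.
Import Order.TTheory GRing.Theory Num.Theory.
Local Open Scope classical_set_scope.
Local Open Scope ring_scope.

Section S.
Context {R : realType}.
Local Notation mu := (@lebesgue_measure R).

Definition shft (k : R) (x : measurableTypeR R) : measurableTypeR R := x + k.

Lemma measurable_shft k : measurable_fun [set: R] (shft k).
Proof. by apply: measurable_funD => //. Qed.

HB.instance Definition _ k := isMeasurableFun.Build _ _ _ _ (shft k) (measurable_shft k).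

Lemma lebesgue_shift k (A : set R) : measurable A ->
  pushforward mu (shft k) A = mu A.
Proof.
move=> mA; apply/esym/lebesgue_measure_unique => //= _ [[a b]] _ <-.
rewrite /pushforward.
have -> : shft k @^-1` `]a, b] = `](a - k), (b - k)]%classic.
  apply/seteqP; split => x /=; rewrite /shft !in_itv /=.
  by rewrite ltrBlDr lerBrDr.
  by rewrite ltrBlDr lerBrDr.
rewrite /= !lebesgue_measure_itv/= !lte_fin ltrD2r.
case: ifP => // _; congr EFin; ring.
Qed.

Lemma integral_shift k (D : set R) (f : R -> \bar R) : measurable D ->
  measurable_fun D f -> (forall x, D x -> (0 <= f x)%E) ->
  (\int[mu]_(x in D) f x = \int[mu]_(x in shft k @^-1` D) f (x + k)%R)%E.
Proof.
move=> mD mf f0.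
rewrite (eq_measure_integral (pushforward mu (shft k))); last first.
  by move=> A mA _; exact: esym (lebesgue_shift k A mA).
rewrite ge0_integral_pushforward//; last by move=> y /set_mem; exact: f0.
Qed.

Lemma integral_opp (D : set R) (f : R -> \bar R) : measurable D ->
  measurable_fun D f -> (forall x, D x -> (0 <= f x)%E) ->
  (\int[mu]_(x in D) f x = \int[mu]_(x in -%R @^-1` D) f (- x)%R)%E.
Proof.
move=> mD mf f0.
rewrite (eq_measure_integral (pushforward mu (-%R : _ -> measurableTypeR R))); last first.
  by move=> A mA _; exact: esym (lebesgue_measureN mA).
rewrite ge0_integral_pushforward//; last by move=> y /set_mem; exact: f0.
Qed.

Lemma mpdf c s (D : set R) : measurable_fun D (fun x => (normal_pdf c s x)%:E).
Proof. have h := measurable_normal_pdf c s. have h2 : measurable_fun setT (fun x => (normal_pdf c s x)%:E) by exact/measurable_EFinP. exact: (measurable_funTS h2). Qed.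

Lemma pdf0 c s (D : set R) : forall x, D x -> (0 <= (normal_pdf c s x)%:E)%E.
Proof. by move=> x _; rewrite lee_fin normal_pdf_ge0. Qed.

Lemma mpdf_shift c s k (D : set R) : measurable_fun D (fun x : R => (normal_pdf c s (x + k))%:E).
Proof.
have h2 : measurable_fun setT (fun x : R => (normal_pdf c s (x + k))%:E).
  apply/measurable_EFinP.
  exact: (measurableT_comp (measurable_normal_pdf c s) (measurable_shft k)).
exact: (measurable_funTS h2).
Qed.

Lemma pdf_refl (c s x : R) : s != 0 -> normal_pdf c s (- x + 2 * c) = normal_pdf c s x.
Proof.
move=> s0; rewrite /normal_pdf (negbTE s0) /normal_fun.
have -> : (- x + 2 * c - c) ^+ 2 = (x - c) ^+ 2 by ring.
by [].
Qed.

Lemma normal_reflect c s (A : set R) : s != 0 -> measurable A ->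
  normal_prob c s A = normal_prob c s [set x | A (2 * c - x)].
Proof.
move=> s0 mA; rewrite /normal_prob (integral_shift (2 * c) A (fun x => (normal_pdf c s x)%:E) mA (mpdf c s A) (@pdf0 c s A)).
have mA' : measurable (shft (2 * c) @^-1` A).
  by rewrite -[X in measurable X]setTI; apply: measurable_shft.
rewrite (integral_opp _ (fun x => (normal_pdf c s (x + 2 * c))%:E) mA' (mpdf_shift c s (2 * c) _)); last first.
  by move=> x _; rewrite lee_fin normal_pdf_ge0.
have -> : -%R @^-1` (shft (2 * c) @^-1` A) = [set x | A (2 * c - x)].
  apply/seteqP; split => x /=; rewrite /shft; by rewrite addrC.
apply: eq_integral => x _; congr EFin; exact: pdf_refl.
Qed.

Lemma nfin (c s : R) (A : set R) : measurable A ->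
  normal_prob c s A = (fine (normal_prob c s A))%:E.
Proof.
move=> mA; rewrite fineK// ge0_fin_numE ?measure_ge0//.
by apply: (le_lt_trans (probability_le1 (normal_prob c s) mA)); rewrite ltry.
Qed.

Lemma half_closed (c s : R) : s != 0 ->
  ((1/2)%:E <= normal_prob c s `[c, +oo[%classic)%E.
Proof.
move=> s0.
have E : normal_prob c s `[c, +oo[%classic = normal_prob c s `]-oo, c]%classic.
  rewrite normal_reflect//; congr (normal_prob c s _).
  apply/seteqP; split => x /=; rewrite !in_itv/= ?andbT => h; lra.
have U : (1 <= normal_prob c s `[c, +oo[%classic + normal_prob c s `]-oo, c]%classic)%E.
  rewrite -(probability_setT (normal_prob c s)).
  have -> : [set: R] = `[c, +oo[%classic `|` `]-oo, c]%classic.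
    apply/seteqP; split => x //= _; rewrite !in_itv/= ?andbT.
    by case: (lerP c x) => h; [left|right; apply: ltW].
  exact: measureU2.
rewrite -E in U; move: U; rewrite nfin// -EFinD !lee_fin => U.
lra.
Qed.

Lemma half_closedN (c s : R) : s != 0 ->
  ((1/2)%:E <= normal_prob c s `]-oo, c]%classic)%E.
Proof.
move=> s0.
have E : normal_prob c s `[c, +oo[%classic = normal_prob c s `]-oo, c]%classic.
  rewrite normal_reflect//; congr (normal_prob c s _).
  apply/seteqP; split => x /=; rewrite !in_itv/= ?andbT => h; lra.
rewrite -E; exact: half_closed.
Qed.

Lemma half_open (c s : R) : s != 0 ->
  (normal_prob c s `]c, +oo[%classic <= (1/2)%:E)%E.
Proof.
move=> s0.
have E : normal_prob c s `]c, +oo[%classic = normal_prob c s `]-oo, c[%classic.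
  rewrite normal_reflect//; congr (normal_prob c s _).
  apply/seteqP; split => x /=; rewrite !in_itv/= ?andbT => h; lra.
have U : (normal_prob c s `]c, +oo[%classic + normal_prob c s `]-oo, c[%classic <= 1)%E.
  rewrite -measureU//; last first.
    apply/seteqP; split => x //= []; rewrite !in_itv/= ?andbT => h1 h2; by have := lt_trans h1 h2; rewrite ltxx.
  by apply: probability_le1; apply: measurableU.
rewrite -E in U; move: U; rewrite nfin// -EFinD !lee_fin => U.
lra.
Qed.
End S.

Section T.
Context {R : realType}.
Local Notation mu := (@lebesgue_measure R).

Lemma pdf_tail (m y x : R) : 0 <= y -> m < x ->
  normal_pdf m 1 (x + y) <= expR (- y ^+ 2 / 2) * normal_pdf m 1 x.
Proof.
move=> y0 mx; rewrite /normal_pdf oner_eq0 /normal_fun.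
rewrite mulrCA -expRD; apply: ler_wpM2l; first exact: normal_peak_ge0.
rewrite ler_expR expr1n.
have -> : (x + y - m) ^+ 2 = (x - m) ^+ 2 + 2 * (y * (x - m)) + y ^+ 2 by ring.
have h : 0 <= y * (x - m) by apply: mulr_ge0 => //; rewrite subr_ge0 ltW.
lra.
Qed.

Lemma tail (m y : R) : 0 <= y ->
  (normal_prob m 1 `](m + y)%R, +oo[%classic <= (expR (- y ^+ 2 / 2) / 2)%:E)%E.
Proof.
move=> y0.
rewrite /normal_prob (integral_shift y _ (fun x => (normal_pdf m 1 x)%:E) (measurable_itv _) (mpdf m 1 _) (@pdf0 _ m 1 _)).
have -> : shft y @^-1` `](m + y)%R, +oo[%classic = `]m, +oo[%classic.
  by apply/seteqP; split => x /=; rewrite /shft !in_itv/= !andbT ltrD2r.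
apply: (@le_trans _ _ (\int[mu]_(x in `]m, +oo[) ((expR (- y^+2/2))%:E * (normal_pdf m 1 x)%:E))%E).
  apply: ge0_le_integral => //.
  - by move=> x _; rewrite lee_fin normal_pdf_ge0.
  - exact: (mpdf_shift m 1 y _).
  - apply/measurable_funTS/measurable_EFinP/measurable_funM => //.
    exact: measurable_normal_pdf.
  - move=> x; rewrite /= in_itv/= andbT => mx; rewrite -EFinM lee_fin.
    exact: pdf_tail.
rewrite ge0_integralZl//=; last 2 first.
  - exact: (mpdf m 1 _).
  - by move=> x _; rewrite lee_fin normal_pdf_ge0.
have -> : (\int[mu]_(x in `]m, +oo[) (normal_pdf m 1 x)%:E)%E = normal_prob m 1 `]m, +oo[%classic by [].
rewrite nfin// -EFinM lee_fin.
have := half_open m 1 (oner_neq0 R); rewrite nfin// lee_fin => h.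
rewrite mulrC [X in _ <= X]mulrC /=; apply: ler_wpM2r; [exact: expR_ge0|rewrite -div1r; exact: h].
Qed.
End T.
Section C.
Context {R : realType}.

Lemma core (mu0 nu0 : set R -> \bar R) (pi : probability (R * R)%type R)
  (p r al be : R) (A B : set R) :
  coupling mu0 nu0 pi -> measurable A -> measurable B -> 0 <= r -> 0 <= p ->
  (forall u v, A u -> ~ B v -> r <= `|u - v|) ->
  (al%:E <= mu0 A)%E -> (nu0 B <= be%:E)%E ->
  ((r `^ p * (al - be))%:E <= \int[pi]_z ((`|z.1 - z.2| `^ p)%:E))%E.
Proof.
move=> cpl mA mB r0 p0 hAB hal hbe.
have [hA _] := cpl A mA; have [_ hB] := cpl B mB.
have mf : measurable_fun setT (fun z : R * R => `|z.1 - z.2|).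
  apply: measurableT_comp; first exact: normr_measurable.
  by apply: measurable_funB; [exact: measurable_fst|exact: measurable_snd].
pose E := [set z : R * R | r <= `|z.1 - z.2|].
have mE : measurable E.
  have := mf measurableT _ (measurable_itv `[r, +oo[).
  congr measurable; apply/seteqP; split => z /=; rewrite ?in_itv/= ?andbT //.
  by case.
have mF : measurable_fun setT (fun z : R * R => (`|z.1 - z.2| `^ p)%:E).
  by apply/measurable_EFinP; exact: (measurableT_comp (measurable_powR p) mf).
have s1 : (pi (A `*` setT) <= pi E + pi (setT `*` B))%E.
  apply: le_trans (measureU2 _ _ _); last 2 first.
  - exact: mE.
  - exact: measurableX.
  apply: le_measure; rewrite ?inE.
  - exact: measurableX.
  - by apply: measurableU => //; exact: measurableX.
  move=> [u v] [/= Au _]; have [Bv|nBv] := pselect (B v).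
    by right.
  by left; exact: hAB.
have fE : pi E = (fine (pi E))%:E.
  rewrite fineK// ge0_fin_numE ?measure_ge0//.
  by apply: (le_lt_trans (probability_le1 pi mE)); rewrite ltry.
have key : al - be <= fine (pi E).
  have h : (al%:E <= pi E + be%:E)%E.
    rewrite -hA in hal; rewrite -hB in hbe.
    apply: (le_trans hal); apply: (le_trans s1); exact: leeD2l.
  move: h; rewrite fE -EFinD lee_fin => h; lra.
have h1 : (\int[pi]_(z in E) (`|z.1 - z.2| `^ p)%:E <= \int[pi]_z (`|z.1 - z.2| `^ p)%:E)%E.
  apply: ge0_subset_integral => //.
have h2 : (\int[pi]_(z in E) (cst (r `^ p)%:E) z <= \int[pi]_(z in E) (`|z.1 - z.2| `^ p)%:E)%E.
  apply: ge0_le_integral => //.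
  all: try (by move=> z _; rewrite lee_fin powR_ge0).
  all: try exact (measurable_funTS mF).
  move=> z Ez; rewrite lee_fin; apply: ge0_ler_powR => //.
apply: (le_trans _ h1); apply: (le_trans _ h2).
rewrite integral_cst//.
rewrite [X in (_ <= _ * X)%E]fE -EFinM lee_fin; apply: ler_wpM2l => //.
exact: powR_ge0.
Qed.
End C.
Section M.
Context {R : realType}.

Lemma gauss1 (m : R) : gauss m 1 = normal_prob m 1.
Proof. by rewrite /gauss sqrtr1. Qed.

Lemma gtail (m x y eps : R) : 0 <= x -> x <= y -> 2 * expR (- x ^+ 2 / 2) <= eps ->
  (gauss m 1 `](m + y)%R, +oo[%classic <= (eps / 4)%:E)%E.
Proof.
move=> x0 xy he; rewrite gauss1; have ht := tail m y (le_trans x0 xy).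
have h2 : ((expR (- y ^+ 2 / 2) / 2)%:E <= (eps / 4)%:E)%E.
  rewrite lee_fin.
  have : expR (- y ^+ 2 / 2) <= expR (- x ^+ 2 / 2).
    rewrite ler_expR; have : x ^+ 2 <= y ^+ 2 by rewrite ler_sqr// nnegrE (le_trans x0 xy).
    lra.
  lra.
exact: (le_trans ht h2).
Qed.

Lemma gtailN (m x y eps : R) : 0 <= x -> x <= y -> 2 * expR (- x ^+ 2 / 2) <= eps ->
  (gauss m 1 `]-oo, (m - y)%R[%classic <= (eps / 4)%:E)%E.
Proof.
move=> x0 xy he; rewrite gauss1 (normal_reflect m 1 _ (oner_neq0 R) (measurable_itv _)).
have -> : [set z | `]-oo, (m - y)%R[%classic (2 * m - z)] = `](m + y)%R, +oo[%classic.
  by apply/seteqP; split => z /=; rewrite !in_itv/= ?andbT => h; lra.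
rewrite -gauss1; exact: gtail he.
Qed.

Lemma finish (x w eps p : R) : 0 <= x -> eps <= w -> 0 <= p ->
  eps * ((4 * x) `^ p / 4 `^ (p + 1)) <= x `^ p * (w / 2 - eps / 4).
Proof.
move=> x0 we p0.
rewrite powRM// ?ler0n// powRD; last by rewrite pnatr_eq0 implybT.
rewrite powRr1 ?ler0n//.
have h4 : 0 < 4 `^ p :> R by apply: powR_gt0.
have hx : 0 <= x `^ p by apply: powR_ge0.
have -> : 4 `^ p * x `^ p / (4 `^ p * 4) = x `^ p / 4 :> R.
  by field; rewrite gt_eqF.
nra.
Qed.
End M.
Section N.
Context {R : realType}.

Lemma stepR (mu0 : set R -> \bar R) (pi : probability (R * R)%type R) (m c w x eps p : R) :
  coupling mu0 (gauss m 1) pi -> 0 <= x -> 0 <= p ->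
  2 * expR (- x ^+ 2 / 2) <= eps -> eps <= w -> m + x <= c - x ->
  ((w / 2)%:E <= mu0 `[c, +oo[%classic)%E ->
  ((eps * ((4 * x) `^ p / 4 `^ (p + 1)))%:E <= \int[pi]_z ((`|z.1 - z.2| `^ p)%:E))%E.
Proof.
move=> cpl x0 p0 he hw hc hal.
have hbe : (gauss m 1 `](c - x)%R, +oo[%classic <= (eps / 4)%:E)%E.
  have -> : c - x = m + (c - x - m) by ring.
  apply: (gtail m x (c - x - m) eps x0 _ he); lra.
have := core mu0 (gauss m 1) pi p x (w / 2) (eps / 4) `[c, +oo[%classic `](c - x)%R, +oo[%classic cpl (measurable_itv _) (measurable_itv _) x0 p0 _ hal hbe.
have e := finish x w eps p x0 hw p0.
move=> h; have h' : forall u v : R, `[c, +oo[%classic u -> ~ `](c - x)%R, +oo[%classic v -> x <= `|u - v|.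
  move=> u v /=; rewrite !in_itv/= !andbT => hu hv.
have hv' : v <= c - x by rewrite leNgt; apply/negP.
  rewrite ger0_norm; lra.
apply: le_trans (h h'); by rewrite lee_fin.
Qed.

Lemma stepL (mu0 : set R -> \bar R) (pi : probability (R * R)%type R) (m c w x eps p : R) :
  coupling mu0 (gauss m 1) pi -> 0 <= x -> 0 <= p ->
  2 * expR (- x ^+ 2 / 2) <= eps -> eps <= w -> c + x <= m - x ->
  ((w / 2)%:E <= mu0 `]-oo, c]%classic)%E ->
  ((eps * ((4 * x) `^ p / 4 `^ (p + 1)))%:E <= \int[pi]_z ((`|z.1 - z.2| `^ p)%:E))%E.
Proof.
move=> cpl x0 p0 he hw hc hal.
have hbe : (gauss m 1 `]-oo, (c + x)%R[%classic <= (eps / 4)%:E)%E.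
  have -> : c + x = m - (m - c - x) by ring.
  apply: (gtailN m x (m - c - x) eps x0 _ he); lra.
have := core mu0 (gauss m 1) pi p x (w / 2) (eps / 4) `]-oo, c]%classic `]-oo, (c + x)%R[%classic cpl (measurable_itv _) (measurable_itv _) x0 p0 _ hal hbe.
have e := finish x w eps p x0 hw p0.
move=> h; have h' : forall u v : R, `]-oo, c]%classic u -> ~ `]-oo, (c + x)%R[%classic v -> x <= `|u - v|.
  move=> u v /=; rewrite !in_itv/= => hu hv.
  have hv' : c + x <= v by rewrite leNgt; apply/negP.
  rewrite ler0_norm; lra.
apply: le_trans (h h'); by rewrite lee_fin.
Qed.
End N.
Section P.
Context {R : realType}.

Lemma mixb (a b s t : R) (A : set R) : 0 <= t <= 1 -> measurable A ->
  (t%:E * gauss b s A <= gmix a b s t A)%E.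
Proof.
move=> /andP[t0 t1] mA; rewrite /gmix; apply: leeDr.
apply: mule_ge0; first by rewrite lee_fin subr_ge0.
rewrite /gauss; exact: measure_ge0.
Qed.

Lemma mixa (a b s t : R) (A : set R) : 0 <= t <= 1 -> measurable A ->
  ((1 - t)%:E * gauss a s A <= gmix a b s t A)%E.
Proof.
move=> /andP[t0 t1] mA; rewrite /gmix; apply: leeDl.
apply: mule_ge0; first by rewrite lee_fin.
rewrite /gauss; exact: measure_ge0.
Qed.

Lemma halfR (c w s : R) : s != 0 -> 0 <= w ->
  ((w / 2)%:E <= w%:E * normal_prob c s `[c, +oo[%classic)%E.
Proof.
move=> s0 w0; rewrite (_ : w / 2 = w * (1 / 2)); last by rewrite div1r.
rewrite EFinM; apply: lee_wpmul2l; first by rewrite lee_fin.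
exact: half_closed.
Qed.

Lemma halfL (c w s : R) : s != 0 -> 0 <= w ->
  ((w / 2)%:E <= w%:E * normal_prob c s `]-oo, c]%classic)%E.
Proof.
move=> s0 w0; rewrite (_ : w / 2 = w * (1 / 2)); last by rewrite div1r.
rewrite EFinM; apply: lee_wpmul2l; first by rewrite lee_fin.
exact: half_closedN.
Qed.
End P.

Theorem lemma3 (R : realType) (a b sigma t p : R) :
  0 < sigma <= 1 -> 0 <= t <= 1 ->
  2 * expR (- (b - a) ^+ 2 / 32) <= Num.min t (1 - t) ->
  1 <= p ->
  ((Num.min t (1 - t) * (`|b - a| `^ p / 4 `^ (p + 1)))%:E
     <= ereal_inf [set Wpp (gmix a b sigma t) (gauss m 1) p | m in [set: R]])%E.
Proof.
move=> /andP[sg0 sg1] ht hyp p1.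
have p0 : 0 <= p by apply: le_trans p1.
have [t0 t1] : 0 <= t /\ t <= 1 by case/andP: ht.
set eps := Num.min t (1 - t) in hyp *.
have epst : eps <= t by rewrite /eps ge_min lexx.
have eps1t : eps <= 1 - t by rewrite /eps ge_min lexx orbT.
set x := `|b - a| / 4.
have x0 : 0 <= x by rewrite /x divr_ge0.
have hd : `|b - a| = 4 * x by rewrite /x mulrC divfK// pnatr_eq0.
have hx : 2 * expR (- x ^+ 2 / 2) <= eps.
  suff -> : - x ^+ 2 / 2 = - (b - a) ^+ 2 / 32 by [].
  rewrite /x expr_div_n real_normK ?num_real//; field; done.
have sq0 : Num.sqrt sigma != 0 by rewrite gt_eqF// sqrtr_gt0.
have w1 : 0 <= 1 - t by rewrite subr_ge0.
rewrite hd.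
apply: le_ereal_inf_tmp => _ [m _ <-].
apply: le_ereal_inf_tmp => _ [pi cpl <-].
have hAR c : measurable (`[c, +oo[%classic : set R) by exact: measurable_itv.
have hAL c : measurable (`]-oo, c]%classic : set R) by exact: measurable_itv.
case: (leP a b) => hab; case: (leP m ((a + b) / 2)) => hm.
- have h4 : 4 * x = b - a by rewrite -hd ger0_norm// subr_ge0.
  apply: (stepR (gmix a b sigma t) pi m b (t) x eps p cpl x0 p0 hx epst); first lra.
  have hm2 := mixb a b sigma t _ ht (hAR b); rewrite /gauss in hm2.
  exact: (le_trans (halfR b t (Num.sqrt sigma) sq0 t0) hm2).
- have h4 : 4 * x = b - a by rewrite -hd ger0_norm// subr_ge0.
  apply: (stepL (gmix a b sigma t) pi m a (1 - t) x eps p cpl x0 p0 hx eps1t); first lra.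
  have hm2 := mixa a b sigma t _ ht (hAL a); rewrite /gauss in hm2.
  exact: (le_trans (halfL a (1 - t) (Num.sqrt sigma) sq0 w1) hm2).
- have h4 : 4 * x = a - b by rewrite -hd ler0_norm ?opprB// subr_le0 ltW.
  apply: (stepR (gmix a b sigma t) pi m a (1 - t) x eps p cpl x0 p0 hx eps1t); first lra.
  have hm2 := mixa a b sigma t _ ht (hAR a); rewrite /gauss in hm2.
  exact: (le_trans (halfR a (1 - t) (Num.sqrt sigma) sq0 w1) hm2).
- have h4 : 4 * x = a - b by rewrite -hd ler0_norm ?opprB// subr_le0 ltW.
  apply: (stepL (gmix a b sigma t) pi m b (t) x eps p cpl x0 p0 hx epst); first lra.
  have hm2 := mixb a b sigma t _ ht (hAL b); rewrite /gauss in hm2.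
  exact: (le_trans (halfL b t (Num.sqrt sigma) sq0 t0) hm2).
Qed.
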